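(* For Domineering on the $5 \times n$ board ($5$ rows, $n$ columns): the $5\times 1$ and $5 \times 3$ boards have outcome $V$, the $5\times 2$ and $5\times 4$ boards have outcome $H$, the $5 \times 5$ board has outcome ${\rm 2nd}$, and the $5 \times n$ board has outcome $H$ for every $n \ge 6$.
   Context: Domineering on an $m \times n$ board (a rectangle of $m$ rows and $n$ columns of unit cells): two players, Vera and Hepzibah, alternately place dominoes on empty cells; Vera places vertical dominoes (covering two vertically adjacent empty cells), Hepzibah places horizontal dominoes (covering two horizontally adjacent empty cells). A player who cannot move on her turn loses. The outcome class of a position is $V$ if Vera wins with optimal play regardless of who moves first, $H$ if Hepzibah wins regardless of who moves first, ${\rm 1st}$ if the player who moves first wins, and ${\rm 2nd}$ if the player who moves second wins. *)

(* Defs.v *)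
From mathcomp Require Import all_boot.
Set Implicit Arguments. Unset Strict Implicit. Unset Printing Implicit Defensive.

Inductive player := Vera | Hepzibah.

Definition opp (p : player) : player :=
  match p with Vera => Hepzibah | Hepzibah => Vera end.

(* A cell is (row, column). *)
Definition cell (m n : nat) := ('I_m * 'I_n)%type.

Definition move (m n : nat) (p : player) (x y : cell m n) (E : {set cell m n}) : Prop :=
  x \in E /\ y \in E /\
  match p with
  | Vera => x.2 = y.2 /\ (nat_of_ord y.1 = (nat_of_ord x.1).+1)
  | Hepzibah => x.1 = y.1 /\ (nat_of_ord y.2 = (nat_of_ord x.2).+1)
  end.

(* E is the set of empty cells.  winsFirst p E: the player p, to move at E,
   has a winning strategy; losesFirst p E: the player p, to move at E,
   loses against optimal play (every move leads to a win for the opponent;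
   in particular a player with no move loses). *)
Inductive winsFirst (m n : nat) (p : player) (E : {set cell m n}) : Prop :=
  | WinMove (x y : cell m n) :
      move p x y E -> losesFirst (opp p) (E :\ x :\ y) -> winsFirst p E
with losesFirst (m n : nat) (p : player) (E : {set cell m n}) : Prop :=
  | LoseAll :
      (forall x y : cell m n, move p x y E -> winsFirst (opp p) (E :\ x :\ y)) ->
      losesFirst p E.

Inductive outcome := OutV | OutH | OutFirst | OutSecond.

Definition has_outcome (m n : nat) (E : {set cell m n}) (o : outcome) : Prop :=
  match o with
  | OutV => winsFirst Vera E /\ losesFirst Hepzibah E
  | OutH => winsFirst Hepzibah E /\ losesFirst Vera E
  | OutFirst => winsFirst Vera E /\ winsFirst Hepzibah E
  | OutSecond => losesFirst Vera E /\ losesFirst Hepzibah E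
  end.

Definition board_outcome (m n : nat) (o : outcome) : Prop :=
  has_outcome [set: cell m n] o.

(* Main.v *)
Require Import Defs.
From mathcomp Require Import all_boot.
From mathcomp Require Import zify.
From Stdlib Require Strings.String Strings.Ascii.
Set Implicit Arguments. Unset Strict Implicit. Unset Printing Implicit Defensive.

Definition idx m n (x : cell m n) : nat := x.1 * n + x.2.
Definition rep m n (s : seq bool) : {set cell m n} := [set x | nth false s (idx x)].
Arguments rep : clear implicits.

Definition vmoves m n : seq (nat * nat) :=
  [seq (r * n + c, r.+1 * n + c) | r <- iota 0 m.-1, c <- iota 0 n].
Definition hmoves m n : seq (nat * nat) :=
  [seq (r * n + c, (r * n + c).+1) | r <- iota 0 m, c <- iota 0 n.-1].
Definition mvs m n p := match p with Vera => vmoves m n | Hepzibah => hmoves m n end.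
Definition legal (s : seq bool) (mv : nat * nat) := nth false s mv.1 && nth false s mv.2.
Definition rm (mv : nat * nat) (s : seq bool) :=
  set_nth false (set_nth false s mv.1 false) mv.2 false.

Definition loopf (g : seq nat -> nat * nat -> option (seq nat)) (s : seq bool) :=
  fix loop (ms : seq (nat * nat)) (cs : seq nat) {struct ms} : option (seq nat) :=
    match ms with
    | [::] => Some cs
    | mv :: ms' =>
      if legal s mv then
        match g cs mv with Some cs1 => loop ms' cs1 | None => None end
      else loop ms' cs
    end.

Fixpoint cw m n (f : nat) (p : player) (s : seq bool) (cs : seq nat) {struct f}
  : option (seq nat) :=
  match f with
  | 0 => None
  | f'.+1 =>
    match cs with
    | [::] => None
    | k :: cs' =>
      if (k < size (mvs m n p)) && legal s (nth (0,0) (mvs m n p) k) then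
        loopf (fun cs mv' => cw m n f' p (rm mv' (rm (nth (0,0) (mvs m n p) k) s)) cs)
          (rm (nth (0,0) (mvs m n p) k) s) (mvs m n (opp p)) cs'
      else None
    end
  end.

Definition cl m n f p s cs :=
  loopf (fun cs mv => cw m n f (opp p) (rm mv s) cs) s (mvs m n p) cs.

Lemma oppK p : opp (opp p) = p. Proof. by case: p. Qed.

Lemma idx_inj m n : injective (@idx m n).
Proof.
move=> [a b] [c d]; rewrite /idx /= => h.
have n0 : 0 < n by have := ltn_ord b; lia.
have hbd : b = d :> nat.
  by have := congr1 (modn^~ n) h; rewrite !modnMDl !modn_small.
have hac : a = c :> nat.
  by have := congr1 (divn^~ n) h; rewrite !divnMDl // !divn_small // !addn0.
by congr pair; apply: val_inj.
Qed.

Lemma in_rep m n s (x : cell m n) : (x \in rep m n s) = nth false s (idx x).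
Proof. by rewrite inE. Qed.

Lemma rep_rm m n s (x y : cell m n) :
  rep m n (rm (idx x, idx y) s) = rep m n s :\ x :\ y.
Proof.
apply/setP => z; rewrite !inE /rm /= !nth_set_nth /= !(inj_eq (@idx_inj m n)).
case: (z == y) => //; rewrite nth_set_nth /= (inj_eq (@idx_inj m n)).
by case: (z == x).
Qed.

Definition shape m n p (x y : cell m n) : Prop :=
  match p with
  | Vera => x.2 = y.2 /\ (nat_of_ord y.1 = (nat_of_ord x.1).+1)
  | Hepzibah => x.1 = y.1 /\ (nat_of_ord y.2 = (nat_of_ord x.2).+1)
  end.

Lemma mvs_shape m n p i j : (i, j) \in mvs m n p ->
  exists x y : cell m n, [/\ i = idx x, j = idx y & shape p x y].
Proof.
case: p => /= /allpairsP [[r c] [/= hr hc [-> ->]]];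
  rewrite mem_iota in hr; rewrite mem_iota in hc.
- have hr1 : r < m by lia.
  have hr2 : r.+1 < m by lia.
  have hc1 : c < n by lia.
  by exists (Ordinal hr1, Ordinal hc1), (Ordinal hr2, Ordinal hc1).
- have hr1 : r < m by lia.
  have hc1 : c < n by lia.
  have hc2 : c.+1 < n by lia.
  exists (Ordinal hr1, Ordinal hc1), (Ordinal hr1, Ordinal hc2); split => //.
  by rewrite /idx /= addnS.
Qed.

Lemma shape_mvs m n p (x y : cell m n) : shape p x y -> (idx x, idx y) \in mvs m n p.
Proof.
case: p => /= [[h1 h2]|[h1 h2]]; apply/allpairsP.
- exists (nat_of_ord x.1, nat_of_ord x.2); rewrite !mem_iota /=; split.
  + have := ltn_ord y.1; lia.
  + have := ltn_ord x.2; lia.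
  + by rewrite /idx h2 h1.
- exists (nat_of_ord x.1, nat_of_ord x.2); rewrite !mem_iota /=; split.
  + have := ltn_ord x.1; lia.
  + have := ltn_ord y.2; lia.
  + by rewrite /idx h2 h1 addnS.
Qed.

Lemma loopf_ok g s ms cs cs' : loopf g s ms cs = Some cs' ->
  forall mv, mv \in ms -> legal s mv -> exists cs0 cs1, g cs0 mv = Some cs1.
Proof.
elim: ms cs => [|a ms IH] cs //= h mv.
rewrite in_cons; case: eqP => [-> _ hl|_ /= hin hl].
- move: h; rewrite hl; case E: (g cs a) => [cs1|] // _; by exists cs, cs1.
- move: h; case: (legal s a); last by move=> h; exact: IH h mv hin hl.
  case: (g cs a) => [cs1|] // h; exact: IH h mv hin hl.
Qed.

Lemma move_rep m n p s (x y : cell m n) :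
  move p x y (rep m n s) <-> [/\ nth false s (idx x), nth false s (idx y) & shape p x y].
Proof.
rewrite /move !in_rep; case: p => /=; split.
- by case=> [a [b c]]; split.
- by case=> a b c.
- by case=> [a [b c]]; split.
- by case=> a b c.
Qed.

Lemma cw_sound m n f : forall p s cs cs', cw m n f p s cs = Some cs' ->
  winsFirst p (rep m n s).
Proof.
elim: f => [|f IH] p s [|k cs] cs' //=.
case: ifP => // /andP [hk]; move: (mem_nth (0,0) hk).
case: (nth (0,0) (mvs m n p) k) => i j hin hl hloop.
have [x [y [hi hj hsh]]] := mvs_shape hin; subst i j.
apply: (WinMove (x := x) (y := y)).
  by apply/move_rep; case/andP: hl.
rewrite -rep_rm; constructor => x' y' /move_rep [h1 h2 h3].
rewrite oppK -rep_rm.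
have [cs0 [cs1 h]] := loopf_ok hloop (shape_mvs h3) (introT andP (conj h1 h2)).
exact: IH h.
Qed.

Lemma cl_sound m n f p s cs cs' : cl m n f p s cs = Some cs' -> losesFirst p (rep m n s).
Proof.
move=> hloop; constructor => x y /move_rep [h1 h2 h3]; rewrite -rep_rm.
have [cs0 [cs1 h]] := loopf_ok hloop (shape_mvs h3) (introT andP (conj h1 h2)).
exact: cw_sound h.
Qed.

Lemma rep_full m n : rep m n (nseq (m * n) true) = [set: cell m n].
Proof.
apply/setP => x; rewrite in_rep inE nth_nseq /idx.
have := ltn_ord x.1; have := ltn_ord x.2; move=> *.
have -> : x.1 * n + x.2 < m * n by nia.
done.
Qed.

Fixpoint decode (s : String.string) : seq nat :=
  match s with
  | String.EmptyString => [::]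
  | String.String c s' => (Ascii.nat_of_ascii c - 48) :: decode s'
  end.

Lemma win_full m n f p cs :
  isSome (cw m n f p (nseq (m * n) true) (decode cs)) -> winsFirst p [set: cell m n].
Proof. case E: cw => [cs'|] // _; rewrite -rep_full; exact: cw_sound E. Qed.

Lemma lose_full m n f p cs :
  isSome (cl m n f p (nseq (m * n) true) (decode cs)) -> losesFirst p [set: cell m n].
Proof. case E: cl => [cs'|] // _; rewrite -rep_full; exact: cl_sound E. Qed.

Definition colsep m n (A B : {set cell m n}) :=
  forall x y, x \in A -> y \in B -> x.2 != y.2.

Lemma colsep_sym m n (A B : {set cell m n}) : colsep A B -> colsep B A.
Proof. by move=> h x y hx hy; rewrite eq_sym; apply: h. Qed.

Lemma colsep_sub m n (A B A' B' : {set cell m n}) :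
  A' \subset A -> B' \subset B -> colsep A B -> colsep A' B'.
Proof.
move=> /subsetP sA /subsetP sB h x y hx hy; apply: h; [exact: sA | exact: sB].
Qed.

Lemma setUD2 (T : finType) (A B : {set T}) x y :
  x \notin B -> y \notin B -> (A :|: B) :\ x :\ y = (A :\ x :\ y) :|: B.
Proof.
move=> hx hy; apply/setP => z; rewrite !inE.
case: (eqVneq z y) => [->|_] /=; first by rewrite (negbTE hy).
case: (eqVneq z x) => [->|_] //=; by rewrite (negbTE hx) ?orbF.
Qed.

Lemma card_D2 (T : finType) (A : {set T}) x y : x \in A -> #|A :\ x :\ y| < #|A|.
Proof.
move=> hx; rewrite (cardsD1 x A) hx add1n ltnS.
by apply: subset_leq_card; apply: subD1set.
Qed.

Lemma lt_helper a A b k : a < A -> A + b < k.+1 -> a + b < k.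
Proof. lia. Qed.

Lemma lt_helper' a A b k : a < A -> b + A < k.+1 -> a + b < k.
Proof. lia. Qed.

Lemma lt_helper2 a A K : a < A -> A < K.+1 -> a < K.
Proof. lia. Qed.

Lemma notin_sep m n (A B : {set cell m n}) x : colsep A B -> x \in A -> x \notin B.
Proof. move=> h hx; apply/negP => hb; by have := h x x hx hb; rewrite eqxx. Qed.

Lemma sum_main m n k : forall A B : {set cell m n}, #|A| + #|B| < k -> colsep A B ->
  (losesFirst Vera A -> losesFirst Vera B -> losesFirst Vera (A :|: B)) /\
  (winsFirst Hepzibah A -> losesFirst Vera B -> winsFirst Hepzibah (A :|: B)).
Proof.
elim: k => [|k IH] A B //= hk hs; split.
- move=> hA hB; constructor => x y [hx [hy [h1 h2]]].
  move: hx hy; rewrite !inE => hx hy.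
  case/orP: hx => hx.
  + have hyA : y \in A.
      case/orP: hy => // hy; by have := hs x y hx hy; rewrite h1 eqxx.
    case: hA => hA; have hw := hA x y (conj hx (conj hyA (conj h1 h2))).
    rewrite setUD2; try exact: (notin_sep hs).
    apply: (proj2 (IH _ _ _ _)) => //.
    * exact: lt_helper (card_D2 y hx) hk.
    * by apply: colsep_sub hs => //; exact: subset_trans (subD1set _ _) (subD1set _ _).
  + have hyB : y \in B.
      case/orP: hy => // hy; by have := hs y x hy hx; rewrite h1 eqxx.
    case: hB => hB; have hw := hB x y (conj hx (conj hyB (conj h1 h2))).
    rewrite setUC setUD2; try exact: (notin_sep (colsep_sym hs)).
    apply: (proj2 (IH _ _ _ _)) => //.
    * exact: lt_helper' (card_D2 y hx) hk.
    * apply: colsep_sym; apply: colsep_sub hs => //.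
      by exact: subset_trans (subD1set _ _) (subD1set _ _).
- move=> hA hB; case: hA => x y [hx [hy hsh]] hl.
  apply: (WinMove (x := x) (y := y)).
    by rewrite /move !inE hx hy orTb.
  rewrite setUD2; try exact: (notin_sep hs).
  apply: (proj1 (IH _ _ _ _)) => //.
  + exact: lt_helper (card_D2 y hx) hk.
  + by apply: colsep_sub hs => //; exact: subset_trans (subD1set _ _) (subD1set _ _).
Qed.

Lemma shift_lt c k N (h : c + k <= N) (j : 'I_k) : c + j < N.
Proof. by apply: leq_trans h; rewrite ltn_add2l. Qed.

Definition shiftc m c k N (h : c + k <= N) (x : cell m k) : cell m N :=
  (x.1, Ordinal (shift_lt h x.2)).

Lemma shiftc_inj m c k N (h : c + k <= N) : injective (@shiftc m c k N h).
Proof.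
move=> [a b] [a' b'] [e1 e2]; congr pair => //; apply: val_inj => /=.
by move: e2 => /addnI.
Qed.

Lemma imsetD1_inj (aT rT : finType) (f : aT -> rT) (A : {set aT}) x :
  injective f -> f @: (A :\ x) = f @: A :\ f x.
Proof.
move=> fi; apply/setP => z; rewrite !inE; apply/imsetP/andP.
- case=> w; rewrite !inE => /andP [hw1 hw2] ->; split.
    by rewrite (inj_eq fi).
  exact: imset_f.
- case=> hne /imsetP [w hw ez]; exists w => //; rewrite !inE hw andbT.
  by apply: contraNneq hne => ew; rewrite ez ew.
Qed.

Lemma move_shift m c k N (h : c + k <= N) p (x y : cell m k) (E : {set cell m k}) :
  move p (shiftc h x) (shiftc h y) (shiftc h @: E) <-> move p x y E.
Proof.
rewrite /move !mem_imset; try exact: shiftc_inj.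
case: p => /=; split; case=> a [b [e1 e2]]; (do 2 (split; first done)); split => //.
- by apply: val_inj; move: e1 => /(congr1 val) /= /addnI.
- by apply: val_inj => /=; rewrite e1.
- by move: e2; rewrite -addnS => /addnI.
- by rewrite e2 addnS.
Qed.

Lemma transport m c k N (h : c + k <= N) K : forall p (E : {set cell m k}), #|E| < K ->
  (winsFirst p E -> winsFirst p (shiftc h @: E)) /\
  (losesFirst p E -> losesFirst p (shiftc h @: E)).
Proof.
elim: K => [|K IH] p E //= hk; split.
- case=> x y hm hl; apply: (WinMove (x := shiftc h x) (y := shiftc h y)).
    by apply/move_shift.
  rewrite -!imsetD1_inj; try exact: shiftc_inj.
  apply: (proj2 (IH _ _ _)) => //.
  exact: lt_helper2 (card_D2 y (proj1 hm)) hk.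
- case=> hl; constructor => x' y' hm.
  have [hx' [hy' _]] := hm.
  case/imsetP: hx' => x hx ex; case/imsetP: hy' => y hy ey; subst x' y'.
  move/move_shift: hm => hm.
  rewrite -!imsetD1_inj; try exact: shiftc_inj.
  apply: (proj1 (IH _ _ _)); last exact: hl.
  exact: lt_helper2 (card_D2 y hx) hk.
Qed.

Definition Blk m N c k : {set cell m N} := [set x : cell m N | c <= x.2 < c + k].
Arguments Blk : clear implicits.

Lemma blk_shift m c k N (h : c + k <= N) : shiftc h @: [set: cell m k] = Blk m N c k.
Proof.
apply/setP => x; rewrite inE; apply/imsetP/idP.
- by case=> y _ -> /=; rewrite leq_addr ltn_add2l ltn_ord.
- case: x => a b /= /andP [h1 h2].
  have hx : b - c < k by rewrite ltn_subLR.
  exists (a, Ordinal hx); first by rewrite inE.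
  rewrite /shiftc /=; congr (_, _); apply: val_inj => /=; by rewrite subnKC.
Qed.

Lemma blk_split m N c a b : Blk m N c (a + b) = Blk m N c a :|: Blk m N (c + a) b.
Proof. apply/setP => x; rewrite !inE; move: (nat_of_ord x.2) => j; apply/idP/idP; lia. Qed.

Lemma blk_sep m N c a b : colsep (Blk m N c a) (Blk m N (c + a) b).
Proof.
move=> x y; rewrite !inE => h1 h2; apply/negP => /eqP e; move: h1 h2; rewrite e.
move: (nat_of_ord y.2) => j; lia.
Qed.

Lemma blk_full m N : Blk m N 0 N = [set: cell m N].
Proof. by apply/setP => x; rewrite !inE /= ltn_ord. Qed.

Lemma blk_transport m c k N (h : c + k <= N) p :
  (winsFirst p [set: cell m k] -> winsFirst p (Blk m N c k)) /\
  (losesFirst p [set: cell m k] -> losesFirst p (Blk m N c k)).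
Proof. rewrite -(@blk_shift m c k N h); exact: transport (ltnSn _). Qed.

Lemma sumLV m N c a b : losesFirst Vera (Blk m N c a) -> losesFirst Vera (Blk m N (c + a) b) ->
  losesFirst Vera (Blk m N c (a + b)).
Proof. rewrite blk_split; exact: (proj1 (sum_main (ltnSn _) (@blk_sep m N c a b))). Qed.

Lemma sumWH m N c a b : winsFirst Hepzibah (Blk m N c a) -> losesFirst Vera (Blk m N (c + a) b) ->
  winsFirst Hepzibah (Blk m N c (a + b)).
Proof. rewrite blk_split; exact: (proj2 (sum_main (ltnSn _) (@blk_sep m N c a b))). Qed.

Lemma sumWH' m N c a b : losesFirst Vera (Blk m N c a) -> winsFirst Hepzibah (Blk m N (c + a) b) ->
  winsFirst Hepzibah (Blk m N c (a + b)).
Proof.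
rewrite blk_split setUC => h1 h2.
exact: (proj2 (sum_main (ltnSn _) (colsep_sym (@blk_sep m N c a b)))).
Qed.
Module Certs. Import Stdlib.Strings.String.
Definition c51V : string := "0".
Definition c51H : string := "".
Definition c53V : string := "1::3;2553925577".
Definition c53H : string := "4;29262624;09060607929526267939006061;09080801;09060601;0;03232190903232180603232180603232".
Definition c52H : string := "140402020".
Definition c52V : string := "324324340340100100100100".
Definition c54H : string := "39;;>060067=0<806068=069;;1667=180617=19;;20206006=009;;1616<77=15;<>00202:;<8077:5;<>00202<>00202;80202<08==<09>06006166162597=0<7=120255;6=>0=:;6028002:;6080>8016>772600>0616>7755980606806120600616<75598=067=1=007=155".
Definition c54V : string := "49>1718171:>>61:81>227;<1<12<2=9>1>22697122:81>226;616127269811622697171262659>2728272:<82<:822727;<2<282889>2>26262:62<2762:82826262;62272762982826262:62<276239>0708070:>>60:80>0780;<0<080809>0>060669700606:80>0680;60608080980060680:6060808049>1718171:<80<:8100;<1<0089>1>00<0<:61<007:81800707;6107007981800707:61<0074:<80<:><;<<209>0>220:<2:80>220;07022098002220:<<205;<=188;=02;<09>1>00202:<1<002;==02;18802002981800202:<1<00239=066=902=:>0>220;<0<020209=2:>0>220;606020209066022209==204:>>61:><:>0;<1<0029>>02:>>02;61020029160202:61<002:481>2275822727380>078048100581003>0>2204>042042700;5<2115<2<282883<0<080804<1<0085<03<0<020204<1<002512851288094>1>2265>2>262623>0>060663>0114>0>2205>1>002023>13061306611:46122562<27623600706461<0074<25<1<0023602242042072:481>226582826262380>0680380>01616480>2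205818002023>0>2203>>1642072380162016;461612726562272762360608080461070074070220518802002360602020461020024270038016201694811622658282626238006068048180070748002220581800202306602220306021642072380162016:461612726562<2762360608080461<0074<<205<1<002360602020461<00242700380162016".
Definition c55V : string := "<7>33?2?39A332@2@@2@>32?329A332@2@;2;>327>33>33?339A33A3C3@3@A3>33?339A33A3;3@3@A3>335>11>1?119A11A1A1C1@11@A11>1?119A11A1A1;1@1@A11>115>11>11?112C89@C89@>11?11:A112828828>117>33?1?31A33C3A33C3@3@A33>31?31:A331313313>317?2?1AC2C11313>21?21A;2;11313>215>11>1?11>1?119A11A13131@11@A11>115>1>1?112CC9@?11:A12828>117?3?33?351151151151159A11A1A1C1@11@A112C89@C89@2CC9@711311711711>627335151161721515?11?11?11?1171171171171179A332@2@;2;9A33A3;3@3@A3:A331313313A;2;113135115115115115>11>11>11>117117117117117<>33?2?39A332@2@@2@>32?329A332@2@;2;>32?<33=3=3:A33@3A3A33@3C33C<33=33:B33B3B3B3383C3C<33?=3<2:@32C2C<3=329B32;2;<32?<2<2=2B@2@2;2;;=22B822;2;82<22?=32=3=2:2@A32@2@;;@;B92;B32;92;@32;?:A332@2C2@C:A33@3A3A33@3C33C:@32C2CB@2@2;2;;:2@A32@2@;@;@;AA:2CA332C2CC2:@C:C@;C;;C:@:CC?<3<33<32@;;@;B2@;@;@;AA82;A32;28;;B;B8;<9A332@2@@2@9A33A33A33C3@3@3@@A339A332@2@@2@AC2C282822C8C@8@8@92@A332@2@@92@@C3@3@3@@2@@2@@2@@92@A332@2@@<>32>33>32>222B8B@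8@8@92@A332@2@@:28C332@28@92@A332@2@@?=32=33=32=22:2CA332C2CC82;A32;92;B332;2;;29;9;8;C;C:CC9;;?9B332;2;2;;:B33B3B3B3383C3C9B32;2;B822;2;8292;B32;28;;B;B8;92;B332;2;;29;;9;8;C;C9;9;;?<32<33<32<2292;@32;2:@C:C@;C;;C:@:CC29;9;8;C;C:CC9;;29;;9;8;C;C9;9;;<9A332@2@;2;9A33A33A33;3@3@3@@A339A332@2@;2;A;2;282822;8;@8@8;92@A332@2@@92@;;3@3@3@@2@;2@@2;;92;A332;2;;<>32>33>32>222;8;@8@8;92@A332@2@@:2883@3@2@28@92;A332;2;;4<>00>0?009A00A0A0C0@00@A00>0?009A00A0A0;0@0@A00>00?<00<00=00:A00A0A0@0C0C<00=00:B00B0B080C0C<00<>00>0?00>0?009A00A03030@00@A00>00<>0>0?003CC90?00:A03030>007>00?00=00=00>00?00=00=00>;C00C0C0@0B0B;C00C0C0@0B0B3C00C00@0C00@0B0BC@0@030307007007007007?00?00<00<00?00?00<00<00<9A00A0A0C0@00@A009A00A0C0@0@A03CC90700300700700<>0>00>07003007007007>00?00=00=00>00?00=00=00>;C00C0C080B0B;C00C0C080B0B3C00C0080C0080B0BC808030307007007007007?00?00<00<00?00?00<00<007=00:A00A00A00@0330303A00<00<00=008;0303:0303:0303303;0303:0303<00<007=00>00<00<00=00>00<00<004<>00>0?009A00A0A0C0@00@A00>0?009A00A0A0;0@0@A00>00<>00?0?09A001@1@@1@>00?009A001@1@;1;>00<?0>0AC0C08088>0?00A;00808;0>00<>0>0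?09A01@1@?009A01@1@>00?=00=00=00=00:A001@1@1@@1@;@B;@;B9B001;1C1;C9@001;1C1;C?:A00A00A00A00@0C0C0CC:A001@1C1@CB@0@0;0;0:A001@1C1@C:A001@1@1@@1@;@B;@;A:A001C1C1CC:@0C0C0CC1@C1@C1@@1CC<?00?0?01C8C8@8@@1B88@8@1;88@8@;8;B01818<9A00A0A0C0@00@A009A001@1@@1@AC0C080889A01@1@1C8C8@8@@9A01@1@19@@C8@88@9@9@9@@9A001@1@1@@<>0>00>01B88@8@9A01@1@:C018189A01@1@?=00=00=00=00:A001C1C1CC18;8B;A;89B001;1C1;C9;0C0C1;1C1;C?9B00B00B00B00;0CC0C0C9B001;1;1;;B8080;0;09B001C1C1CC9B001;1C1;C18;8B;B;89B001;1C1;C9;0CC0C0C1;;1CC1;C1;C<?00?00?00?0019@@C8@88@9@9@9@@:C0181819@;;8@8@9@9@9;@1:8;8@8@:89@@9;@<9A00A0A0;0@0@A009A001@1@;1;A;00808;09A01@1@1;88@8@;89A01@1@19@;;8@8@9@9@9;@9A001;1@1;@<>00>00>00>00;B018189A001@1@1@@1:8;8@8@:89@@9;@9A001;1@1;@?6<22<11=211:@@;:C@:<21=219B221;1;1;;<216<22=2=2:A22@2A2A22@2C22C<22=22:B22B2B2B2282C2C<224<00<00=00:A00A0A0@0C0C<00=00:B00B0B080C0C<004<00<0=00:A001@1C1@C<0=009B001;1;1;;<006=2=00@:2@<20=209B20202<206<11=0=1<10=10:B11B002B1002C22C<104<0<0=00B@0@02020=00B80802020<004<00<0=002A00A00@0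A00@0C0C<0=009B001C1C1CC<00=5116240051614005161:@@;:C@::A22@2A2A22@2C22C0@:2@0224004004004<00<0<06006006006004=00=00=00=006006006006004:B00B0B080C0C9B001;1;1;;B808020209B001C1C1CC6006006006004<00<00<00<006006006006007?=3<2:@32C2C<3=329B32;2;<32?=3=00@:3@<30=309B30303<30?=0<0<0=00:B01313<00?<2<00A@=20B2;0202<20?:@32C2C0@:3@0A@1350050?<3<30<013500505@C0B0C0B0<00=0=009B0B00C0202B0<00=05>0<00=0=00>0<00=05>00?00=00=00>00?00=00=00?9B32;2;9B30303:B01313B2;020250500505?0<00<00?00?0<00<00=@;3;2932;@;3;00303@;0;01313@;2;0020250500505>0<00=0=00>0<00=06><11<1;@13131<1;A13131;C113131311<11?<11=0=1<10=10:B11B002B1002C22C<10><00<0<0;A03030;C03030<00><1<00C@ACC02C13302002<10?=11=1=10@@3B0:2:23B3:0@@3:?<11<10<00<100@@3BA31023002;31102B22B3002310=3C11C11@1C11@1B1B0@22C2@22C2A2A@22@C0C330C@1@0020C2C33@3@1@00AC31102A2A30002310@31B1B02230022022><1<10<00@33AA0:31::0:00:?=11=10=00=10A310230023;11;00:BB0C;10;103;1;00:C:C;10>;C113131311;C11C002C1002B22B;C03030C133020020;2C33:31::0:00:;31C10303103;11;00:B::B0:;10?<11<10<00<100@@3:3;1;00:C:C;103;11;00:C::C0:;10=3@1:1:;1@1;1;110@22;2@22;2A2A@22;@030300@22:2:A:A@22;3102023@1@00:;3102A2A303100@223@;@223:3;:A><11<10<00<100@@3:A310230023;11;00:B::B0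:;104<?0>0AC0C08088>0?00A;00808;0>00<?0?02AC0A>00?00;A02020>00<?0>0>0?00A02202330>00<>0>02CA?00A080220>007?0=00=00?0?00=00=007?0AC0022C0022>00?0?00A;0022;0022>00<AC0C080882AC0A2CA3070070<>0>00>030700707?0=00=00?0?00=00=00?B8080;0;0B80802020B80803030B8080202070707007?00?00<00<00?00?00<00<00<A;00808;0;A02020A02202330A08022070700707=00>00<0=00>00<00<05<>11>1?11>1?119A11A13131@11@A11>11=?11?0?18@10202?108@1102022028@10202=?0?03B@?00@02202330@BB30=?11?0?1?108@102028@10202=?11?1?10B30299293390BB39>3C11C11@1C11@1B1B0@22C2@22C2A2A@22@C0C330C@1@0020C2C33@3@1@00AC31102A2A30002310@31B1B02230022022<?11?10?00?103BB0@831@11@0220202022B31023002<>1>10>03BB0@3CC09391900@09=?11?10?00?103BB09082239A99A8239822B31023002>3C11C1181C1181B1B0C2929C282822823C009C0009B9B8C102020C2C339831020208223C99B8239822831B1B0202022<?11?10?00?103CC09082239@99@823982208239@9@82822=8@11@13131A11A@118@110202202@022023308@10202029929339381@009082239A99A82398228@110202022<>11>10>00>10B3102300208239@9@8282208229AA3@8228228224<>0>0?003CC90?00:A03030>00<>0>0?09A01@1@?009A01@1@>00<>0>02CA?00A080220>00<>0>0?0?009A01313>006>0?00=0>0?00=0=006>0?00CA0@0A0@0>0?00:A0A0@0202A00>00<?00?0?02060600<3CC909A01@1@2CA20606006>0?00=0>0?00=0=00>C80803030C80809018C80802020C8080131360606006?00?00<0?00?00<0<00<:A030309A01@1@A0802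209A0131360606006=00>00<00<00=00>00<00<00?5=11=11=11=117117117117117=32=3=2:2@A32@2@;;@;B92;B32;92;@32;7=33=3=30334004004005=11=1=10:@:@;@;@0@;@B;@;B09;9C;B;909;9C;@;9=511624005161400517=31=3=10@20:3B22;0@@2;7=21=2=10240400=51192@@3@B@B2@2@4005103@2@3@2@40051=511624005161400517511:2@A32@03302035175112@;;@;B4000@20340751192;B32;4000:3B22;404051751192;@32;4000@@2;4005151>72;CC@B:@@:@A:AA:@A;C33C3C3@3B3B1;3@3;3@35115115115116;C223@3A3@A;C22@2C2C22@2B22B;@23A3AC@2@2:2::;3@C23@3@:@:@:AA;3AC223A3AA3;@A;A@:B::B;@;AA7;C33C3C3@3B3B;C33@3C3C33@3B33B0@;3@0334004004005;C11C1C1@1B1B0;C@;@@::C;:A@::;@0C0@0C@1@00:;C10@0@0@::@::@:ACACC;1;10;00:0:A:A@;1B1B0::;00::0::61;@@:;A@:;C22@2C2C22@2B22B0@;2@0224004004007@;3;22B2;0@;3@0@;2@505005071;3@3;3@3;C22@2C2C22@2B22B0@;2@02240040040053C11C11@1C11@1B1B0@22C2@22C2A2A@22@C0C330C@1@0020C2C33@3@1@00AC31102A2A30002310@31B1B0223002202261CC@3C@2@2:2::0C@024040061;@C33:;3@C23@022020202261@:333@:@:@:AA4000@3024061;AC33:;3AC223A3AA4000;2C33:404040075112:@A:A@;B;;B:@:AA4005040051400<7?3?33?35115115115117?3?33?32C8C@8@8@2B8B@8@8@2;8;@8@8;2;8;@8@8;4?00?00?00?007007007007004?00?0?01C8C8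@8@@1B88@8@1;88@8@;8;B018184?00?0?02006006006007?3?30?0500500500500?737301;@;@@;@@BB6107013@@BB3@3@@6104?00?0?01B318@@383381BB384?00?0?0206060047001C8C8@8@@20020207047001B88@8@6001B3206047001;88@8@;860018@@383386060704700;B018186001BB386007070=58@11@1@1C1A11A@112C98AC88A2CC8A711311711711638C@C998AC88@89B8@22@2C2A2A@2@C2C3398@2C2@23C99C99@9@B@B83A@23AC38882A2A39982389@82282398239B9B48@00@0@0C0A00A@008@00@0C0A0A@03CC8070030070070058@11@1@1C1A11A@118@110A0AA0A@C0C090998@10A0A0C9C9@9@@8@10A0A08AAC9A99A8A8A8AA8@110A0A0AA48@00@0C0A0A@018@CA@9@@9@A9AA9@A2C080C0806006006006005@C0C090992@C0@2C@307007063C11C11@1C11@1B1B0@22C2@22C2A2A@22@C0C330C@1@0020C2C33@3@1@00AC31102A2A30002310@31B1B0223002202248@00@0@0C0A00A@002C080C0802CC8070030070070043CC80C80801@182CC80606060057110C9C9@9@@0C9220C2317153118@10A0A28A@0093031310470019AAC8A88A9A9A9AA600700606060057118@110A0A0AA28A@0097028A@00971710<>627335151161721516>2>22>23B8B@8@8@39@9@8@8@3:8:@8@8:39@9@8@8:4>0>00>07003007007004>0>00>01B88@8@9A01@1@:C018189A01@1@4>00>00>00>00600600600600>62730505006072050>61730:1@0@B@B1@@1@6106071031@0@1@0@4>0>00>030700704>0>00>01B33CC18390A11847001B88@8@6001B3206043009A01@1@6003020604700:C018186007003CC18606047009A01@1@60070390A118606047>00?00=00=00>00?00=00=00?=00=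00=00=00:A001C1C1CC18;8B;A;89B001;1C1;C9;0C0C1;1C1;C6>00?00=00=00>00?00=00=007?0=00=00?0?00=00=00=?00?00?00?003BB1819AA38A88A93389A3B301830136>0?00=0>0?00=0=007>00?0?0AC0303C0133133133>00?00:A001313313>00?70018;8B;A;860018B833A386007070=70019AAC8A88A9A9A9AA6007006060600=700:B018186007003BB186060?7009B001;1C1;C600709B001C131C360070600?7009;0C0C1;1C1;C600700930C0C1C131C3600600600=70019A;;8A8A9A9A9;A60070019AA38A88A93389A36060600=700:B001818188600700B30183013600600600?79B332;2;2;;9B33B3B33;CC;C;C:B3313131338B2131351151151151179B332;2;2;;:B33B3B3B3383C3C9B32;2;B822;2;8292;B32;28;;B;B8;92;B332;2;;29;;9;8;C;C9;9;;79B33B3B33;CC;C;C:B33B3B3B3383C3C9B30303:B33B003B3003C33C40040040040049B00B00B00B00;0CC0C0C9B001;1;1;;B8080;0;09B001C1C1CC9B001;1C1;C18;8B;B;89B001;1C1;C9;0CC0C0C1;;1CC1;C1;C4:B00B0B080C0C9B001;1;1;;B808020209B001C1C1CC60060060060079B32;2;9B30303:B01313B2;020250500507:B331313133:B33B003B3003C33C:B01313B133020020:3B22;2;BB0;00;:13B30131332:CC:00;C;;C0;:C078B21313B822;2;82B2;0202B13302002404040049B00B00B00B0030CC0C0C9B001C1C1CCB808030309B0013131339B001C131C318B833B389B001C131C3290080C0C0CC9009009004:B0030303009B001C1C1CCB808020209B001313133600600600600751192;B32;4000:3B22;404051751128;;B;B8;400502;BB0;00;404047009B001;1C1;C600709B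001C131C360070600751129;;9;8;C;C9;9;;400502:CC:00;C;;C0;:C040051400<5?11?11?11?117117117117116?22?22?22?22C38882@2@399823893:8:@8@8:;3882@2@39389;3882@2@393894?00?00?00?007007007007004?00?00?00?0019@@C8@88@9@9@9@@:C0181819@;;8@8@9@9@9;@1:8;8@8@:89@@9;@4?00?00?00?006006006006005?00?00?00?007007007007006?11?10?00?10C31102@2@300023103:1:00@0:;3102@2@30310;3102@2@303104?00?00?00?007007007007004?00?00?00?003CC1819@@38@88@93389@319@38@8@939@34?00?00?00?006060600470019@@C8@88@9@9@9@@60070060606004700:C018186007003CC186060470019@;;8@8@9@9@9;@60070019@@38@88@93389@360606007511:2883@3@2@28@400500:1303@3@13133400400400<79A332@2@;2;9A33A3;3@3@A3:A331313313A;2;1131351151151151179A332@2@;2;9A33A33A33;3@3@3@@A339A332@2@;2;A;2;282822;8;@8@8;92@A332@2@@92@;;3@3@3@@2@;2@@2;;92;A332;2;;49A00A0A0;0@0@A00:A00A008@@8@8@A09A00A03030@00@A00:A0303070070070070049A00A0A0;0@0@A009A001@1@;1;A;00808;09A01@1@1;88@8@;89A01@1@19@;;8@8@9@9@9;@9A001;1@1;@4:A00A008@@8@8@A09A001@1@;1;;A020209A001@1@@1@60060060060079A332@2@;2;9A330303303:A001313313A;2;002025005005005007:A331313313:A33A00A3003@@3@3@A30:A001313313A;1;002022;@;00@0;:13A30131331:33:33;3@3@3@@:33:33:13A30131334A;00808;0;A02020A02202330A080220707007049A00A03030@00@A009A001@1@@1@A022023309A0131318@@38338390A11819@@38@88@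93389@39A001@131@34:A030309A01@1@A0802209A01313606060047001;88@8@;860018@@3833860607047009A01@1@60070390A1186060470019@;;8@8@9@9@9;@60070019@@38@88@93389@3606060047009A001;1@1;@600709A001@131@36007060075=11>11<11<11=11>11<11<11<>32>33>32>222;8;@8@8;92@A332@2@@:2883@3@2@28@92;A332;2;;4=00>00<00<00=00>00<00<005>0<00=0=00>0<00=0><31<30<00<100@@2;A130313022:BB:00;B;;B0;:B04=00>00<0=00>00<00<0>51192;@32;4000@@2;4005151>5112:@A:A@;B;;B:@:AA4005040051400<5112;8;@8@8;4005002;@;00@0;40404<00<0=00B@0303@0133133133<0=009B001313133<00>51192;A332;2;;400500A13031302400400400>51129;;9;8;B;B9;9;;400502:BB:00;B;;B0;:B040051400<511:2883@3@2@28@400500:1303@3@13133400400400<51192;A332;2;;400500:13A30131334040400".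
Definition c55H : string := "3@=22B2B2B2279??:449?9?79??:449?9?=22=22@=44B4B4B4459??C4C4?4?9??9??<9??5445454=44=44@=22=44B24B2479??C4?4?9?9?79??A4?4?9?9?=24=24@B2B4B249C2C52:2:9A2A52:2:=24=24@B2B4B246226226226226B22B22@22@22B22B22@22@226B22B227C4544595595959557A45459559595955=22=2=2=226B22B227?454459559595955=22=2=2=226@22@227C454459559595955:C2C27474:CC74?22@22@79??:449?9?<9??544545479??A4?4?9?9?9A2A52:2:6226226226226B22B22=22=22:C2C27474<:229229292=22=226B22B22=2=2:CC74<:29292=22=;2;4@24@2462626226@22@22=22=22@22@22=22=22@6=00=00B00B00800800800800B8794<?>::A7:A>?:A873434344B800<5?>05?803030300B6004<?>::A09?440945660B6007:A>?:A<5?>05?70?>?0?>0::A0:6060B870878009?4470?>?0?340340B8903430094>0::A0:340B600343056603406B00B0B030030030030068004C0C0>0>07>00C0:0:>0>0300300808086004A7A:7?7?4A0A05?5?4A7A00<0<4A:A00:0:60606800=0=030030080806800=0=03003008080B6@44@55@45@45844844844844@844<9?9?:47:A>?:A8484:4>4>>A74?:A4?@8440<?>::A84840:40:A44@644<9?9?:4011010164@6557:A>?:A0<?>::A1001010658@44@4@4100100100100@84484840110100@645:4>4>>A0:40110100@64574?:A4?0:A44646510010068440A4A49A9C0A>A77A7C0A4A>4>4>0A4A74<4<848486447:44?4>4>:4:40?4?4:4:410010064648644;4;410010064648644;4;410010064641@=00B0B0B009C0?0?C05??5??5??<9005??5?5?=00=00B@00@0@0;007>005AC5A5C7>005C?5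C5?;00;008B00B00@00@00B00B00@00@00@B0B0B00800800800800B@0@0@005A9A22>2>5?9?22>2>;00;00B;00;00@00@0075ACA0C0C5A5C75C??0C0C5C5?;00;00B<9005CC5C5C7>005AC5A5C8008005A9A22>2>75ACA0C0C5A5C8008008B00B005?292297997979799B00B00>??52>?0?052528@00@005C292297997979799;00;0;0;008@00@005A292979979797995?292297997979799;00;0;0;008B00B00B00B00;00;00;00;00;=0=0B00B0080808008@00@00<>05252>??52;0;0;008@00@00<>005225252>?0?05252;00;00;00;00@3=22B2B2B2279??:449?9?79??:449?9?=22=22B8794<?>::A7:A>?:A873434344B844<9?9?:47:A>?:A8484:4>4>>A74?:A4?B822879<9?9?9??:CC7:A:A>??:AA82782929?:>9?7:A:A:AA?ACACACCB<9?9?9??:4C4<?>::A<9?9?:4<9?9?9??:CC<9??4?9?9??4?C??C>4:44::AA:4>44>9AA:<4C4A<4<CC4ACAACB7:A:A>??:AA7:A>?:A7:A>?:A7:A:A>??:AA<>?2>?>?>2?2?C?C>2::A:A2::2>>A>A2>:7AA7A7A7AA2ACACB3228784827<9??4?9?9??4?C??C<>?2>?>?>2?2?C?C324324B323484829>4:44::AA>2::A:A2:324B3234:4>4>>A29?:>9?:4>44>9AA:2>>A>A2>324B32234474?:A4?7:A:A:AA?ACACACC:<4C4A<4<CC4ACAAC:7AA7A7A7AA2ACAC324324379??:449?9?79??:449?9?79??9??C4?4?4??9??9??9C2C:2:2::C2C424247:44:44C4?4?4??:44:4479?9?9??:4479?9?9??:44379??:449?9?79??:449?9?79??9??A4?4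?4??9??9??9A2A:2:2::A2A424247:44:44A4?4?4??:44:4479?9?9??:4479?9?9??:443=22=44=24=24:>2>42424<:2:4C24:2479?9?9??:4479?9?9??:443=22=44=24=24:>2>42424<:2:424?4?:2479?9?9??:4479?9?9??:44;=4A5C??59A5C??5A?5?5C55?553443434344=9A0C??0A?0C0?03003030300B8440?>?<<:<:0?>440?<448484B855800><55<00A??0:<50<509?5?00:0:?A5A0A500<C<C850850=A?5?5C55?55A?0C0?00A:C??<A?5?0C50?50AC55C00:C500:>::>C5<<0:00:?5<<0<00<?A55A00<A500<><<>B3443000?>449?5?00:0:A?55?00:?500:>::>340340B3443000?<44?A5A0A500<C<C?A55A00<A500<C<<C3403408?C44C55C454545>5>4C0C??00C4C??4C?55?0009:9:09?5004::C4C9:9:4::4::C454009?4540094?5>5>?00::0::0::8?A4A545<5<45A45A?04040A?40404A?5?009:9:?5004::A4A9:9:4::4::04:4:9:<:<4::?45400904::?4?A9<4::4::B3448084850<>55>00:>500:C::C340340=34300C49CC0:C5<<0:00:340=34300?49??0:?5<<0<00<340=3443000?<449?5?00:0:?A55A00<A500<><<>340340=@644655:<44<99ACC4><49<49AC4C9C494>?>?5A4A94>4>645645@6004A>A::>:>0A9440A9446060;5A4C??4A?4C4?40110101011;5A9C??90A9C??9A?9?9C99?991001010100;A?4?9C49?494A:C??<A?4C4?4A?9?9C99?99AC494:C4C994:>::>C4:44:9::?4<44<9<<?A494<A4A994<><<>@AC4C9C494>?>?0A944011100AC494>C4C994>?>>?100100@5A4A94>4>0A944011100AC494:C4C994:>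::>1001006AC4C5C4545>5>AC04040AC40404CA5A0A500909<9<04<<A4CA9<4<<4<<C45400904<4<9<C<C4<<4A5>5>A00<<0<<0<<6?C44C55C454545>5>4C0C??00C4C??4C?55?0009:9:09?5004::C4C9:9:4::4::C454009?4540094?5>5>?00::0::0::;5A4A94<4<0A944011100AC494:C4C994:>::>100100;5CC4<0C40110C4:44:9::100;5??4<0?40110?4<44<9<<100@6456064100:<494><4<994>A>>A100100B@6556227:A:A>??:AA<5?5?>??5??7>?>?>???ACACACC25?>:5?652652@6007:A>?:A<5?>05?70?>?0?>0::A0:6060@6557:A>?:A0<?>::A1001010651@00@0@0;007>005AC5A5C7>005C?5C5?;00;00@7:A:A>??:AA7:A>?:A7:A>?:A7:A:A>??:AA<>?2>?>?>2?2?C?C>2::A:A2::2>>A>A2>:7AA7A7A7AA2ACAC@<5?5?>??5??<5?>05?0<?>::A<5?5?>?05??<>??>00?>?00?C??C>5??0:00::>AA0>00>:<CC<00A<C00ACAAC@7>?>?>???ACACACC70?>?0?100100<>?2>?>?>2?2?C?C<>??>00?>?00?C??C100100@25?>:5?>0::A0:1010>2::A:A2:>5??0:00:100@652601010:2>>A>A2>:>AA0>00>100@6526065100:7AA7A7A7AA2ACAC:<CC<00A<C00ACAAC10010017>005AC5A5C7>005AC5A5C7>00>00A0C0C0CC>00>00>A0A020205A>A22>2>75AC5ACA0C0C0CC5AA5CC75A5A>005AA75C5C>005CC17>005C?5C5?7>005C?5C5?7>00>00?0C0C0CC>00>00>?0?020205?>?22>2>75C?5C??0C0C0CC5CC5?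?75C5C>005CC75?5?>005??1;00;00<>0>020C0C>00>:0:02020;00;0075A5A>005AA75C5C>005CC1;00;00<>0>0?00>00>:0:02020;00;0075C5C>005CC75?5?>005??18B00B00@00@00B00B00@00@008B00B00@00@00B00B00@00@00=@00@00AC0C0C0040>0>?C00C00C004040>0>AC0C0C0040>0>C<0<04040@00@00=@00@00AC0C0C0020>0>?C00C00C002020>0>AC0C0C0020>0>C<0<02020@00@003B00B00@00@00B00B00@00@003B00B00@00@00B00B00@00@003B00B007C0400490090909007A04049009090900=00=0=0=003B00B007?040049009090900=00=0=0=003@00@007C0400490090909007C04049009090?CC70?00@003@00@007A040490090909007?0400490090909009A0202700700<0<0<?09090@00@00B800800<909040C0C900<>0>020C0C>003003003003003B00B00=0=0?CC70<?09090=003@00@00=0=0?00@00=003@00@00=00=00@00@00=00=001@B0B0B00800800800800@B0B0B00800800800800@B0B0B009C0C00::0::9A0A00::0::=00=00B@0@0@00>A0A02020>?0?02020>:0:02020>:0:020203B00B00@00@00B00B00@00@003B009C0C020229A00202A0B0=0=0=003B00902202??0B0=0=0=003@009C0C020229C0::9C:?0@03@009A00202A0902202??0A:0909090202:0@0@03B00B0B09C0::A:09090=00=003B00=0=09C:90202:0=003@00=0=0?0@0=003@00=00=00@0@0=00=003@B2B4B24622622622622@B4B0B40600600600600@B2B4B24:C2C42424:A2A42424:>2>42424:>2>42424B@4@0@405A4A44>>4>>5?4?44>>4>>;40;401B00B00@00@00B00B00@00@001B005C2C242445A22424A2B0B052424>2A>052521B00524424??2B0B05?>5?2>>1@005C2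C24244:00:0:0@01@005A22424A2524424??2;00;0;0@01B00B0B0:00;00;00;001B00B0B0:0;0;001@0052424>25?>:0;0;001@00A>052525?2>>@0@0;00;0036B22B22@22@22B22B22@22@226B00B00@00@00B00B00@00@00;B22B44C?22?4424:4:24?24A?2?424:4:?24B24B24?<2<42424A?2?4?2424:4:;B44B00C?44?0004:4:04?40A?4?004:4:?40B40B40?<4<00404A?4?0?4004:4:1B00B00@00@00B00B00@00@001B00B00@00@00B00B00@00@001B00B005C2422474474747445A24247447474744B00B00<C052525A2424744744<2<21B00B005?242247447474744B00B00?CC525?242474474741@00@005C242247447474744;00;0;0;001@00@005A242474474747445?242247447474744;00;0;0;001B00B00B00B00;00;00;00;001B00B00B00B00;0;0;001@00@00<C05252?CC52;0;0;00@622600<:2:424?4?:24<545404?4?5441001001001001B<90054454547>005AC5A5C8008005A4A>4>4>75AC4004040800800B<9005CC5C5C7>005AC5A5C8008005A9A22>2>75ACA0C0C5A5C800800B<9005445454<9005CC5C5C9<00<00A0C0C0CC<00<00>A0A040405A4A94>4><5445CC40CC0C0C54C54C<545C90054C<545C90054CB7>005AC5A5C7>005AC5A5C7>00>00A0C0C0CC>00>00>A0A020205A>A22>2>75AC5ACA0C0C0CC5AA5CC75A5A>005AA75C5C>005CC3B00B007C0400490090909007A04049009090900=00=0=0=003B009C0C020229A00202A0B0=0=0=003B005C2C242445A22424A2B0B052424>2A>052523B00B005C2422474474747445A24247447474744B00B00<C052525A2424744744<2<237C0400490090909009C0C020225C2C242445C24224744747474479005445454790545479054547900544545437A0404900909090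09A00202A05A22424A25A242474474747447900544545479054547905454790054454543=00B0B0B007900544545479005445454=00=003=0=0B0B0079054547905454=003=0=052424>2<C0525279054547905454=003=00=00A>052525A2424744744<2<27900544545479005445454=00=0063B22B227?454459559595955=22=2=2=228B00407707??0B0B04?>4?0>>8B44047747??4B4B40?>0?4>>8B22B000?797792992929299B20B20>??07>?2?00707=?C44C55C454545>5>4C0C??00C4C??4C?55?0009:9:09?5004::C4C9:9:4::4::C454009?4540094?5>5>?00::0::0::=?C55C22C522525>5>?C00C00707>7>0C7C??70?C77>2::2:2:2::0C7:7:C72::2:2:2C50:0:2?50:0:2?5>5>0::0:0:3B22B002?454450440404044B20B20>??04>?2?004043B22B000?474472442424244B20B20?CC040?4747244242482?595594554545455407707??0047747??40?7977929929292992455099090924509092450909245509909098B42B0B4B2024550990909245090924509098B42B0B4B20245090924509093=2=0>??04?CC04?74700404=203=22=00>?2?004040?4747244242407?499244244244244=20=2086@44@222C595594554545455:C4C22929:CC29?42@426@004C0C070774C0::4C:?0@06@440C4C474770C4::0C:?4@41@00@005C292297997979799;00;0;0;00;2C9:9?4::4:4:4::4C7C??7?C44C44747>7>C?22?7729:9:29?2724::C9:9:4:4:24:C94:24:?94:42::?7?7>7>2:2:;?C44C55C454545>5>4C0C??00C4C??4C?55?0009:9:09?5004::C4C9:9:4::4::C454009?4540094?5>5>?00::0::0::1@00@002C0900940040404002C09094004040?CC20?00@001@00@002C090094004040400:C0C02020:CC20?00@0062C5955945545454554C0C070770C4C474770C7977929929292992455099090924509092450909245509909091;00;002C09094004040: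C0C0202047C055200200200200;00;001;0;0?CC20:CC20C54522020;006?42?0?4?20245090924509096@42@0@4@2024550990909245090924509093@79??:449?9?<9??544545479??A4?4?9?9?9A2A52:2:622622622622@79??:449?9?<900544545479??04404049A:A00:0:600600600600@79??:449?9?79??:449?9?79??9??A4?4?4??9??9??9A2A:2:2::A2A424247:44:44A4?4?4??:44:4479?9?9??:4479?9?9??:44@<9??5445454<9005445454<9??90004??4?4?9?09?09A5A00:0::A4A004045<44<44A4?4?4??<44<44<54549?0544<54549?05441@00@007A040490090909007?0400490090909009A0202700700<0<0<?09090@00@001@009A00202A0902202??0A:0909090202:0@0@01@005A22424A2524424??2;00;0;0@01@00@005A242474474747445?242247447474744;00;0;0;0017A040490090909009A00202A05A22424A25A2424744747474479005445454790545479054547900544545417?040049009090900902202??0524424??25?24224744747474479005445454790545479054547900544545419A0202700700<0<0A:09090;00;007900544545479005445454;00;001<?0909090202:0;0;079054547905454;001@00@0;0;079054547905454;001@00@0@0;007900544545479005445454;00;00B;84482532234459A9A4>4<75A5A>::5AA324324;870878009:4470:>:0:3403408644;4;410010064641;00;00800800;00;00800800;3228784827<9::4:9:9::4:C::C<>:2>:>:>2:2:C:C324324;3448084850<>55>00:>500:C::C340340;59A9A4>4<09:44011100<9::4:9:9::4:C::C1001001;00;00<>0>020C0C>00>:0:02020;00;0075A5A>005AA75C5C>005CC1800800<909040C0C900<>0>020C0C>003003003003001800800>:0:04040>:0:0202030030301;00;00;00;0030030301;00;00;00;003003003003001800800<545C90054C75A5A>005AA30030303001800800:9009009004040C0C7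5C5C>005CC30030303001;=0=0B00B008080800;=0=0B00B008080800;=0=0B00B00C90904040<909040:0:900=00=;0;0C<0<02020C:0:02020C70522020C5?522020;003B00B00=0=0?CC70<?09090=003B00=0=09C:90202:0=003B00B0B0:0;0;003B00B00B00B00;0;0;003=0=0B0B0079054547905454=003=0=0B0B007905454=003?CC709C::0;07905454;003<?0909090202:0;0;079054547905454;003=00=00;00;00=00=00;00;003=;2;4@24@246262622=;4;0@40@406060600;=2=4?>2>42424?<2<42424?74742424?74742424=24=;4;0@40@40<545404>4>544?54540404;401@00@00=0=0?00@00=001@00=0=0?0@0=001@0052424>25?>:0;0;001@00@00<C05252?CC52;0;0;001=0=052424>2<C0525279054547905454=001=0=05?>?CC527905454=001?00?0:0;07905454;001@00@0;0;079054547905454;001=00=00;00;00=00=00;00;00@3=22=44=24=246226226226226800=0=03003008080=64574>:>4>0:>446465100100=65260079?9?:>>9??95?5?0<0:1001001001003=22=44=24=24:>2>42424<:2:424?4?:2479?9?9??:4479?9?9??:44=3443000:>4495?5?0<0::<>><00><>00>A>>A340340=6456064100:<494><4<994>A>>A100100=6526065100:7>>7>7>7>>2>A>A:<>><00><>00>A>>A1001001800800=00=003003003003001800800=00=0030030303622600:>2>42424:>4>0040410010103622600<:2:424?4?:24<545404?4?5441001001001001800800>5445??40?0?4054?75?5?>005??3003030300362260079?9?9??:44<54549?05441001010100".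
End Certs.

Lemma t51V : winsFirst Vera [set: cell 5 1].
Proof. apply: (win_full (f:=20) (cs:=Certs.c51V)). vm_compute. reflexivity. Qed.
Lemma t51H : losesFirst Hepzibah [set: cell 5 1].
Proof. apply: (lose_full (f:=20) (cs:=Certs.c51H)). vm_compute. reflexivity. Qed.
Lemma t53V : winsFirst Vera [set: cell 5 3].
Proof. apply: (win_full (f:=20) (cs:=Certs.c53V)). vm_compute. reflexivity. Qed.
Lemma t53H : losesFirst Hepzibah [set: cell 5 3].
Proof. apply: (lose_full (f:=20) (cs:=Certs.c53H)). vm_compute. reflexivity. Qed.
Lemma t52H : winsFirst Hepzibah [set: cell 5 2].
Proof. apply: (win_full (f:=20) (cs:=Certs.c52H)). vm_compute. reflexivity. Qed.
Lemma t52V : losesFirst Vera [set: cell 5 2].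
Proof. apply: (lose_full (f:=20) (cs:=Certs.c52V)). vm_compute. reflexivity. Qed.
Lemma t54H : winsFirst Hepzibah [set: cell 5 4].
Proof. apply: (win_full (f:=20) (cs:=Certs.c54H)). vm_compute. reflexivity. Qed.
Lemma t54V : losesFirst Vera [set: cell 5 4].
Proof. apply: (lose_full (f:=20) (cs:=Certs.c54V)). vm_compute. reflexivity. Qed.
Lemma t55V : losesFirst Vera [set: cell 5 5].
Proof. apply: (lose_full (f:=20) (cs:=Certs.c55V)). vm_compute. reflexivity. Qed.
Lemma t55H : losesFirst Hepzibah [set: cell 5 5].
Proof. apply: (lose_full (f:=20) (cs:=Certs.c55H)). vm_compute. reflexivity. Qed.

Lemma even_blk k : 0 < k -> forall N c, c + 2 * k <= N ->
  winsFirst Hepzibah (Blk 5 N c (2 * k)) /\ losesFirst Vera (Blk 5 N c (2 * k)).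
Proof.
elim: k => [|k IH] // _ N c h.
case: (posnP k) => [k0|kpos].
  subst k; rewrite muln1 in h *.
  split; [exact: (proj1 (@blk_transport 5 c 2 N h Hepzibah)) t52H
         | exact: (proj2 (@blk_transport 5 c 2 N h Vera)) t52V].
have h2 : c + 2 <= N by lia.
have h3 : (c + 2) + 2 * k <= N by lia.
have [IH1 IH2] := IH kpos N (c + 2) h3.
have -> : 2 * k.+1 = 2 + 2 * k by lia.
split.
- apply: sumWH => //; exact: (proj1 (@blk_transport 5 c 2 N h2 Hepzibah)) t52H.
- apply: sumLV => //; exact: (proj2 (@blk_transport 5 c 2 N h2 Vera)) t52V.
Qed.

Lemma odd_blk k : 0 < k -> forall N c, c + (5 + 2 * k) <= N ->
  winsFirst Hepzibah (Blk 5 N c (5 + 2 * k)) /\ losesFirst Vera (Blk 5 N c (5 + 2 * k)).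
Proof.
move=> kpos N c h.
have h5 : c + 5 <= N by lia.
have h3 : (c + 5) + 2 * k <= N by lia.
have [E1 E2] := even_blk kpos h3.
have L5 := (proj2 (@blk_transport 5 c 5 N h5 Vera)) t55V.
split; [exact: sumWH' | exact: sumLV].
Qed.

Theorem mainTheorem3 :
  board_outcome 5 1 OutV /\ board_outcome 5 3 OutV /\
  board_outcome 5 2 OutH /\ board_outcome 5 4 OutH /\
  board_outcome 5 5 OutSecond /\
  (forall n : nat, 6 <= n -> board_outcome 5 n OutH).
Proof.
split; first exact: (conj t51V t51H).
split; first exact: (conj t53V t53H).
split; first exact: (conj t52H t52V).
split; first exact: (conj t54H t54V).
split; first exact: (conj t55V t55H).
move=> n hn; rewrite /board_outcome /= -blk_full.
have := odd_double_half n; case: (odd n) => /= hn2.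
- have e : n = 5 + 2 * (n./2 - 2) by lia.
  have k0 : 0 < n./2 - 2 by lia.
  have h : 0 + (5 + 2 * (n./2 - 2)) <= n by lia.
  have := odd_blk k0 h; rewrite -e; case=> a b; exact: (conj a b).
- have e : n = 2 * n./2 by lia.
  have k0 : 0 < n./2 by lia.
  have h : 0 + 2 * n./2 <= n by lia.
  have := even_blk k0 h; rewrite -e; case=> a b; exact: (conj a b).
Qed.
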